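(* Let $k\ne\ell$ be in $\{1,\dots,r\}$. (a) If $(\bm n;\bm m),(\bm n+\bm e_k;\bm m),(\bm n+\bm e_\ell;\bm m)\in\mathfrak C_{2r}$ are normal, then there is a complex number $\gamma^{k\ell}_{\bm n;\bm m}$ with $\Phi_{\bm n+\bm e_k;\bm m}-\Phi_{\bm n+\bm e_\ell;\bm m}=\gamma^{k\ell}_{\bm n;\bm m}\Phi_{\bm n;\bm m}$. (b) If $(\bm n-\bm e_k-\bm e_\ell;\bm m),(\bm n-\bm e_k;\bm m),(\bm n-\bm e_\ell;\bm m),(\bm n;\bm m)\in\mathfrak C_{2r}$ are normal, then $\bm\Xi_{\bm n-\bm e_k;\bm m}-\bm\Xi_{\bm n-\bm e_\ell;\bm m}=\gamma^{k\ell}_{\bm n-\bm e_k-\bm e_\ell;\bm m}\bm\Xi_{\bm n;\bm m}$, where $\gamma^{k\ell}_{\bm n-\bm e_k-\bm e_\ell;\bm m}$ is the number from (a) for the index $(\bm n-\bm e_k-\bm e_\ell;\bm m)$. (c) If $(\bm n;\bm m),(\bm n;\bm m+\bm e_k),(\bm n;\bm m+\bm e_\ell)\in\mathfrak C_{2r}$ are normal, then there is a complex number $\eta^{k\ell}_{\bm n;\bm m}$ with $\Phi^*_{\bm n;\bm m+\bm e_k}-\Phi^*_{\bm n;\bm m+\bm e_\ell}=\eta^{k\ell}_{\bm n;\bm m}\Phi^*_{\bm n;\bm m}$. (d) If $(\bm n;\bm m-\bm e_k-\bm e_\ell),(\bm n;\bm m-\bm e_k),(\bm n;\bm m-\bm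 e_\ell),(\bm n;\bm m)\in\mathfrak C_{2r}$ are normal, then $\bm\Xi^*_{\bm n;\bm m-\bm e_k}-\bm\Xi^*_{\bm n;\bm m-\bm e_\ell}=\eta^{k\ell}_{\bm n;\bm m-\bm e_k-\bm e_\ell}\bm\Xi^*_{\bm n;\bm m}$, where $\eta^{k\ell}_{\bm n;\bm m-\bm e_k-\bm e_\ell}$ is the number from (c) for the index $(\bm n;\bm m-\bm e_k-\bm e_\ell)$.
   Context: Fix $r\ge1$; $\bm e_j$ is the $j$-th standard unit vector of $\mathbb Z^r$; for $\bm v\in\mathbb Z^r$, $|\bm v|=v_1+\dots+v_r$ (signed). Let $c_{k,j}\in\mathbb C$ ($k\in\mathbb Z$, $1\le j\le r$) and let $L_j$ be the linear functional on complex Laurent polynomials with $L_j[w^{-k}]=c_{k,j}$. $\mathfrak C_{2r}=\{(\bm n;\bm m)\in\mathbb Z^r\times\mathbb Z^r:n_j+m_j\ge0\ \forall j\}$. For $(\bm n;\bm m)\in\mathfrak C_{2r}$, $\bm n\ne-\bm m$, let $T_{\bm n;\bm m}$ be the square matrix of size $|\bm n|+|\bm m|$ with rows indexed by pairs $(j,k)$, $1\le j\le r$, $-m_j\le k\le n_j-1$ (ordered by $j$, then increasing $k$), columns indexed by $i=-|\bm m|,\dots,|\bm n|-1$, entries $c_{k-i,j}$; $T_{\bm n;-\bm n}:=1$. $(\bm n;\bm m)$ is normal if $\det T_{\bm n;\bm m}\ne0$. For normal $(\bm n;\bm m)$, $\bm n\ne-\bm m$: $\Phi_{\bm n;\bm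 m}$ is the unique Laurent polynomial in $\operatorname{span}\{z^k\}_{k=-|\bm m|}^{|\bm n|}$ with $z^{|\bm n|}$-coefficient $1$ and $L_j[\Phi_{\bm n;\bm m}(w)w^{-k}]=0$ for $-m_j\le k\le n_j-1$, all $j$; $\Phi^*_{\bm n;\bm m}$ is the unique one in that span with $z^{-|\bm m|}$-coefficient $1$ and $L_j[\Phi^*_{\bm n;\bm m}(w)w^{-k}]=0$ for $-m_j+1\le k\le n_j$, all $j$; $\bm\Xi_{\bm n;\bm m}=(\Xi_{\bm n;\bm m,j})_{j=1}^r$ is the unique vector with $\Xi_{\bm n;\bm m,j}\in\operatorname{span}\{z^k\}_{k=-n_j}^{m_j-1}$, $\sum_jL_j[\Xi_{\bm n;\bm m,j}(w)w^{-k}]=0$ for $-|\bm n|+1\le k\le|\bm m|-1$ and $=1$ for $k=-|\bm n|$; $\bm\Xi^*_{\bm n;\bm m}$ is the unique vector with $\Xi^*_{\bm n;\bm m,j}\in\operatorname{span}\{z^k\}_{k=-n_j+1}^{m_j}$, the same vanishing conditions, and $=1$ for $k=|\bm m|$. For $\bm n=-\bm m$: $\Phi=\Phi^*=1$, $\bm\Xi=\bm\Xi^*=\bm0$. *)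

(* Defs.v *)
From mathcomp Require Import all_boot all_order all_algebra.
From mathcomp Require Import reals complex.
Set Implicit Arguments. Unset Strict Implicit. Unset Printing Implicit Defensive.
Import Order.TTheory GRing.Theory Num.Theory.
Local Open Scope ring_scope.

Section MOP.
Variables (R : realType) (r : nat).
Local Notation C := (R[i]).

Definition mi := 'I_r -> int.
Definition msum (v : mi) : int := \sum_(j < r) v j.
Definition ev (k : 'I_r) : mi := fun j => (j == k)%:Z.
Definition madd (v w : mi) : mi := fun j => v j + w j.
Definition msub (v w : mi) : mi := fun j => v j - w j.

Definition inC2r (n m : mi) : Prop := forall j, 0 <= n j + m j.

(* Coefficients c_{k,j}; L_j[w^{-k}] = c k j. *)
Definition coefs := int -> 'I_r -> C.

(* Laurent polynomials are represented by their coefficient functions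
   p : int -> C (p i = coefficient of z^i); "p in span{z^k}_{k=a}^{b}". *)
Definition in_span (a b : int) (p : int -> C) : Prop :=
  forall i, i < a \/ b < i -> p i = 0.

(* For p supported in the window {a, ..., a + len - 1}:
   L_j[p(w) w^{-k}] = sum_i p_i L_j[w^{-(k-i)}] = sum_i p_i c_{k-i,j}. *)
Definition Lwin (c : coefs) (j : 'I_r) (a : int) (len : nat) (p : int -> C)
    (k : int) : C :=
  \sum_(t < len) p (a + t%:Z) * c (k - (a + t%:Z)) j.

(* Rows of T_{n;m}: pairs (j,k), 1<=j<=r, -m_j <= k <= n_j - 1, ordered by j
   then increasing k; each row is stored as the function i |-> c_{k-i,j}. *)
Definition Trows (c : coefs) (n m : mi) : seq (int -> C) :=
  flatten [seq [seq (fun i => c ((- m j + t%:Z) - i) j)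
               | t <- iota 0 (absz (n j + m j))] | j <- enum 'I_r].

Definition Tsize (n m : mi) : nat := absz (msum n + msum m).

(* T_{n;m}: columns indexed by i = -|m|, ..., |n|-1.  For n = -m this is the
   empty 0x0 matrix, whose determinant is 1 (matching T_{n;-n} := 1). *)
Definition Tmat (c : coefs) (n m : mi) : 'M[C]_(Tsize n m) :=
  \matrix_(a, b) nth (fun _ => 0) (Trows c n m) a (- msum m + (b : nat)%:Z).

Definition normal (c : coefs) (n m : mi) : Prop := \det (Tmat c n m) != 0.

Definition is_Phi (c : coefs) (n m : mi) (P : int -> C) : Prop :=
  [/\ in_span (- msum m) (msum n) P, P (msum n) = 1 &
      forall j k, - m j <= k <= n j - 1 ->
        Lwin c j (- msum m) (Tsize n m).+1 P k = 0].

Definition is_Phistar (c : coefs) (n m : mi) (P : int -> C) : Prop :=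
  [/\ in_span (- msum m) (msum n) P, P (- msum m) = 1 &
      forall j k, - m j + 1 <= k <= n j ->
        Lwin c j (- msum m) (Tsize n m).+1 P k = 0].

(* sum_j L_j[X_j(w) w^{-k}] for X_j supported in {a_j, ..., a_j + n_j + m_j - 1} *)
Definition Lvec (c : coefs) (n m : mi) (a : 'I_r -> int) (X : 'I_r -> int -> C)
    (k : int) : C :=
  \sum_(j < r) Lwin c j (a j) (absz (n j + m j)) (X j) k.

Definition is_Xi (c : coefs) (n m : mi) (X : 'I_r -> int -> C) : Prop :=
  ((forall j, n j + m j = 0) -> forall j i, X j i = 0) /\
  (~ (forall j, n j + m j = 0) ->
   [/\ forall j, in_span (- n j) (m j - 1) (X j),
       forall k, - msum n + 1 <= k <= msum m - 1 ->
         Lvec c n m (fun j => - n j) X k = 0 &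
       Lvec c n m (fun j => - n j) X (- msum n) = 1]).

Definition is_Xistar (c : coefs) (n m : mi) (X : 'I_r -> int -> C) : Prop :=
  ((forall j, n j + m j = 0) -> forall j i, X j i = 0) /\
  (~ (forall j, n j + m j = 0) ->
   [/\ forall j, in_span (- n j + 1) (m j) (X j),
       forall k, - msum n + 1 <= k <= msum m - 1 ->
         Lvec c n m (fun j => - n j + 1) X k = 0 &
       Lvec c n m (fun j => - n j + 1) X (msum m) = 1]).

End MOP.

(* Main.v *)
Require Import Defs.
From mathcomp Require Import all_boot all_order all_algebra.
From mathcomp Require Import reals complex zify ring.
From Stdlib Require Import FunctionalExtensionality.
Import Order.TTheory GRing.Theory Num.Theory.
Local Open Scope ring_scope.
Set Implicit Arguments. Unset Strict Implicit. Unset Printing Implicit Defensive.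

Section H.
Variables (R : realType) (r : nat).
Local Notation C := (R[i]).

Definition zs (a : int) (len : nat) : seq int := [seq a + t%:Z | t <- iota 0 len].

Lemma mem_zs a len i : (i \in zs a len) = (a <= i) && (i < a + len%:Z).
Proof.
apply/mapP/idP.
  by case=> t; rewrite mem_iota => /andP[_ ht] ->; apply/andP; split; lia.
move=> /andP[h1 h2]; exists (absz (i - a)); last lia.
rewrite mem_iota; apply/andP; split; lia.
Qed.

Lemma uniq_zs a len : uniq (zs a len).
Proof.
rewrite map_inj_uniq ?iota_uniq // => x y /addrI [] //.
Qed.

Lemma sum_support (f : int -> C) (s1 s2 : seq int) : uniq s1 -> uniq s2 ->
  (forall i, f i != 0 -> i \in s1) -> (forall i, f i != 0 -> i \in s2) ->
  \sum_(i <- s1) f i = \sum_(i <- s2) f i.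
Proof.
move=> u1 u2 h1 h2.
have e s : \sum_(i <- s) f i = \sum_(i <- [seq i <- s | f i != 0]) f i.
  rewrite big_filter [RHS]big_mkcond /=; apply: eq_bigr => i _.
  by case: eqP => // ->.
rewrite (e s1) (e s2); apply: perm_big; apply: uniq_perm; rewrite ?filter_uniq //.
move=> i; rewrite !mem_filter; case: (f i =P 0) => //= /eqP hi.
by rewrite h1 ?h2.
Qed.

Lemma Lwin_seq (c : coefs R r) j a len p k :
  Lwin c j a len p k = \sum_(i <- zs a len) p i * c (k - i) j.
Proof. by rewrite /Lwin /zs big_map -(big_mkord xpredT (fun t => p (a + t%:Z) * c (k - (a + t%:Z)) j)) /index_iota subn0. Qed.


Lemma sum_ev (k : 'I_r) : \sum_(j < r) ev k j = 1.
Proof.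
rewrite (bigD1 k) //= big1 ?addr0; first by rewrite /ev eqxx.
by move=> j /negPf; rewrite /ev => ->.
Qed.

Lemma msum_add (n : mi r) k : msum (madd n (ev k)) = msum n + 1.
Proof. by rewrite /msum /madd big_split /= sum_ev. Qed.

Lemma msum_sub (n : mi r) k : msum (msub n (ev k)) = msum n - 1.
Proof. by rewrite /msum /msub big_split /= sumrN sum_ev. Qed.

Lemma Tsize_eq (n m : mi r) : inC2r n m -> (Tsize n m)%:Z = msum n + msum m.
Proof.
move=> h; rewrite /Tsize gez0_abs // /msum -big_split /=.
by apply: sumr_ge0 => j _; apply: h.
Qed.

Definition idx (n m : mi r) : seq ('I_r * nat) :=
  flatten [seq [seq (j, t) | t <- iota 0 (absz (n j + m j))] | j <- enum 'I_r].

Definition rowf (c : coefs R r) (m : mi r) (p : 'I_r * nat) : int -> C :=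
  fun i => c ((- m p.1 + (p.2)%:Z) - i) p.1.

Lemma Trows_idx c (n m : mi r) : Trows c n m = map (rowf c m) (idx n m).
Proof.
rewrite /Trows /idx map_flatten -map_comp; congr flatten; apply: eq_map => j /=.
by rewrite -map_comp.
Qed.

Lemma size_idx (n m : mi r) : inC2r n m -> size (idx n m) = Tsize n m.
Proof.
move=> h; apply/eqP; rewrite -eqz_nat Tsize_eq // size_flatten sumnE /shape.
rewrite big_map big_map big_enum /=.
rewrite (big_morph _ PoszD (erefl 0%:Z)) /msum -big_split /=.
apply/eqP; apply: eq_bigr => j _; rewrite size_map size_iota gez0_abs //; exact: h.
Qed.

Lemma mem_idx (n m : mi r) j t : ((j, t) \in idx n m) = (t < absz (n j + m j)%R)%N.
Proof.
apply/flatten_mapP/idP.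
  by case=> j' _ /mapP [t'] ht [-> ->]; rewrite mem_iota in ht.
by move=> ht; exists j; rewrite ?mem_enum //; apply/mapP; exists t; rewrite ?mem_iota.
Qed.


Lemma uniqT (x0 : 'I_r) (c : coefs R r) (n m : mi r) (Q : int -> C) :
  inC2r n m -> normal c n m -> in_span (- msum m) (msum n - 1) Q ->
  (forall j kk, - m j <= kk <= n j - 1 ->
     \sum_(i <- zs (- msum m) (Tsize n m)) Q i * c (kk - i) j = 0) ->
  forall i, Q i = 0.
Proof.
move=> hC hN hS hL.
have uA : Tmat c n m \in unitmx by rewrite unitmxE unitfE.
pose v : 'cV[C]_(Tsize n m) := \col_b Q (- msum m + (b : nat)%:Z).
have Av : Tmat c n m *m v = 0.
  apply/matrixP => a b0; rewrite !mxE; under eq_bigr do rewrite !mxE; rewrite Trows_idx.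
  have ha : (a < size (idx n m))%N by rewrite size_idx.
  rewrite (nth_map (x0, 0%N)) //.
  move: (mem_nth (x0, 0%N) ha); case: (nth _ _ _) => j t; rewrite mem_idx => ht.
  have hk : - m j <= - m j + t%:Z <= n j - 1.
    by apply/andP; split; move: (hC j); lia.
  have := hL j _ hk; rewrite -Lwin_seq /Lwin => h; apply: (etrans _ h).
  by apply: eq_bigr => b _; rewrite mulrC.
have v0 : v = 0 by rewrite -(mulKmx uA v) Av mulmx0.
move=> i; case: (boolP ((- msum m <= i) && (i <= msum n - 1))) => hi; last first.
  apply: hS; move: hi; rewrite negb_and -!ltNge => /orP[]; by [left | right].
have hb : (absz (i + msum m)%R < Tsize n m)%N.
  have := Tsize_eq hC; move: hi => /andP [h1 h2] h3; lia.
have := congr1 (fun M : 'cV_(Tsize n m) => M (Ordinal hb) 0) v0; rewrite !mxE /=.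
move: hi => /andP [h1 h2].
by have -> : - msum m + (absz (i + msum m))%:Z = i by lia.
Qed.


Lemma in_span_nz (a b : int) (p : int -> C) i : in_span a b p -> p i != 0 -> a <= i <= b.
Proof.
move=> h; apply: contraNT; rewrite negb_and -!ltNge => /orP hi.
by apply/eqP; apply: h; case: hi; [left|right].
Qed.

Lemma uniqTT (x0 : 'I_r) (c : coefs R r) (n m : mi r) (X : 'I_r -> int -> C) :
  inC2r n m -> normal c n m -> (forall j, in_span (- n j) (m j - 1) (X j)) ->
  (forall K, - msum n <= K <= msum m - 1 -> Lvec c n m (fun j => - n j) X K = 0) ->
  forall j i, X j i = 0.
Proof.
move=> hC hN hS hL.
have uA : Tmat c n m \in unitmx by rewrite unitmxE unitfE.
pose w : 'rV[C]_(Tsize n m) := \row_a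
  (let p := nth (x0, 0%N) (idx n m) a in X p.1 (m p.1 - (p.2)%:Z - 1)).
have wA : w *m Tmat c n m = 0.
  apply/matrixP => a0 b; rewrite !mxE; under eq_bigr do rewrite !mxE; rewrite Trows_idx.
  pose G (p : 'I_r * nat) := X p.1 (m p.1 - (p.2)%:Z - 1) * rowf c m p (- msum m + (b : nat)%:Z).
  transitivity (\sum_(p <- idx n m) G p).
    rewrite (big_nth (x0, 0%N)) size_idx // big_mkord; apply: eq_bigr => a _.
    by rewrite (nth_map (x0, 0%N)) ?size_idx.
  have hK : - msum n <= msum m - (b : nat)%:Z - 1 <= msum m - 1.
    apply/andP; split; have := Tsize_eq hC; have := ltn_ord b; lia.
  apply: (etrans _ (hL _ hK)); rewrite /Lvec /idx big_flatten /= big_map big_enum /=.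
  apply: eq_bigr => j _; rewrite big_map Lwin_seq.
  transitivity (\sum_(i <- [seq m j - t%:Z - 1 | t <- iota 0 (absz (n j + m j))])
                  X j i * c (msum m - (b : nat)%:Z - 1 - i) j).
    rewrite big_map; apply: eq_bigr => t _; rewrite /G /rowf /=; congr (_ * c _ _); lia.
  apply: sum_support; rewrite ?uniq_zs //.
  - rewrite map_inj_uniq ?iota_uniq // => x y h; lia.
  - move=> i; rewrite mulf_eq0 negb_or => /andP[/(in_span_nz (hS j)) hi _].
    apply/mapP; exists (absz (m j - 1 - i)%R); last lia.
    rewrite mem_iota; apply/andP; split; first by [].
    by move: (hC j); lia.
  - move=> i; rewrite mulf_eq0 negb_or => /andP[/(in_span_nz (hS j)) hi _].
    by rewrite mem_zs; move: (hC j); lia.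
have w0 : w = 0 by rewrite -(mulmxK uA w) wA mul0mx.
move=> j i; case: (boolP ((- n j <= i) && (i <= m j - 1))) => hi; last first.
  apply: hS; move: hi; rewrite negb_and -!ltNge => /orP[]; by [left | right].
have hp : (j, absz (m j - 1 - i)%R) \in idx n m by rewrite mem_idx; move: (hC j); lia.
have ha : (index (j, absz (m j - 1 - i)%R) (idx n m) < Tsize n m)%N.
  by rewrite -size_idx // index_mem.
have := congr1 (fun M : 'rV_(Tsize n m) => M 0 (Ordinal ha)) w0; rewrite !mxE /=.
rewrite nth_index //=.
by have -> : m j - (absz (m j - 1 - i)%R)%:Z - 1 = i by lia.
Qed.


Lemma span0 (a b : int) (p : int -> C) i : in_span a b p -> ~~ ((a <= i) && (i <= b)) -> p i = 0.
Proof.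
move=> h hi; apply: h; move: hi; rewrite negb_and -!ltNge => /orP[]; by [left|right].
Qed.

Lemma span_mono (a b a' b' : int) (p : int -> C) :
  in_span a b p -> a' <= a -> b <= b' -> in_span a' b' p.
Proof. move=> h h1 h2 i hi; apply: h; case: hi => hi; [left|right]; lia. Qed.

Lemma span_comb (a b : int) (p q u : int -> C) g :
  in_span a b p -> in_span a b q -> in_span a b u ->
  in_span a b (fun i => p i - q i - g * u i).
Proof. by move=> h1 h2 h3 i hi; rewrite h1 // h2 // h3 // mulr0 !subr0. Qed.

Lemma Lwin_change (c : coefs R r) j a len a' len' (p : int -> C) k lo hi :
  in_span lo hi p -> a <= lo -> hi < a + len%:Z -> a' <= lo -> hi < a' + len'%:Z ->
  Lwin c j a len p k = Lwin c j a' len' p k.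
Proof.
move=> hS h1 h2 h3 h4; rewrite !Lwin_seq; apply: sum_support; rewrite ?uniq_zs //.
  by move=> i; rewrite mulf_eq0 negb_or => /andP[/(in_span_nz hS) hin _]; rewrite mem_zs; lia.
by move=> i; rewrite mulf_eq0 negb_or => /andP[/(in_span_nz hS) hin _]; rewrite mem_zs; lia.
Qed.

Lemma Lwin_comb (c : coefs R r) j a len (p q u : int -> C) g k :
  Lwin c j a len (fun i => p i - q i - g * u i) k =
  Lwin c j a len p k - Lwin c j a len q k - g * Lwin c j a len u k.
Proof.
rewrite /Lwin mulr_sumr -!sumrB; apply: eq_bigr => t _.
by rewrite !mulrBl mulrA.
Qed.

Lemma Lwin_shift (c : coefs R r) j a len (p : int -> C) k :
  Lwin c j a len (fun i => p (i + 1)) k = Lwin c j (a + 1) len p (k + 1).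
Proof.
rewrite /Lwin; apply: eq_bigr => t _.
have -> : a + t%:Z + 1 = a + 1 + t%:Z by lia.
by have -> : k - (a + t%:Z) = k + 1 - (a + 1 + t%:Z) by lia.
Qed.

Lemma Lvec_comb (c : coefs R r) (n m : mi r) A (X Y Z : 'I_r -> int -> C) g k :
  Lvec c n m A (fun j i => X j i - Y j i - g * Z j i) k =
  Lvec c n m A X k - Lvec c n m A Y k - g * Lvec c n m A Z k.
Proof.
rewrite /Lvec mulr_sumr -!sumrB; apply: eq_bigr => j _; exact: Lwin_comb.
Qed.

Lemma Lvec_shift (c : coefs R r) (n m : mi r) (X : 'I_r -> int -> C) k :
  Lvec c n m (fun j => - n j) (fun j i => X j (i + 1)) k =
  Lvec c n m (fun j => - n j + 1) X (k + 1).
Proof. by rewrite /Lvec; apply: eq_bigr => j _; rewrite Lwin_shift. Qed.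

Lemma Lvec_change (c : coefs R r) (n m n' m' : mi r) A A' (X : 'I_r -> int -> C) k
    (lo hi : 'I_r -> int) :
  (forall j, in_span (lo j) (hi j) (X j)) ->
  (forall j, 0 <= n j + m j) -> (forall j, 0 <= n' j + m' j) ->
  (forall j, A j <= lo j) -> (forall j, hi j < A j + (n j + m j)) ->
  (forall j, A' j <= lo j) -> (forall j, hi j < A' j + (n' j + m' j)) ->
  Lvec c n m A X k = Lvec c n' m' A' X k.
Proof.
move=> hS h0 h0' h1 h2 h3 h4; rewrite /Lvec; apply: eq_bigr => j _.
apply: (@Lwin_change c j _ _ _ _ (X j) k (lo j) (hi j) (hS j)).
- exact: h1.
- by rewrite gez0_abs //; apply: h2.
- exact: h3.
- by rewrite gez0_abs //; apply: h4.
Qed.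

Lemma exchange (c : coefs R r) (P : int -> C) a0 len0 (n m : mi r) A
    (X : 'I_r -> int -> C) k0 :
  \sum_(i <- zs a0 len0) P i * Lvec c n m A X (k0 - i) =
  \sum_(j < r) \sum_(s <- zs (A j) (absz (n j + m j)))
      X j s * Lwin c j a0 len0 P (k0 - s).
Proof.
rewrite /Lvec.
under eq_bigr do rewrite mulr_sumr.
rewrite exchange_big /=; apply: eq_bigr => j _.
under eq_bigr do rewrite Lwin_seq mulr_sumr.
rewrite exchange_big /=; apply: eq_bigr => s _.
rewrite Lwin_seq mulr_sumr; apply: eq_bigr => i _.
rewrite mulrCA; congr (_ * (_ * c _ _)); lia.
Qed.


Lemma Lwin_Phi (c : coefs R r) (n m : mi r) P a len j kk :
  inC2r n m -> is_Phi c n m P -> a <= - msum m -> msum n < a + len%:Z ->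
  - m j <= kk <= n j - 1 -> Lwin c j a len P kk = 0.
Proof.
move=> hC [hS _ hO] h1 h2 hk; have hT := Tsize_eq hC.
rewrite (@Lwin_change c j a len (- msum m) (Tsize n m).+1 P kk _ _ hS) //; last lia.
exact: hO.
Qed.

Lemma Lwin_Phistar (c : coefs R r) (n m : mi r) P a len j kk :
  inC2r n m -> is_Phistar c n m P -> a <= - msum m -> msum n < a + len%:Z ->
  - m j + 1 <= kk <= n j -> Lwin c j a len P kk = 0.
Proof.
move=> hC [hS _ hO] h1 h2 hk; have hT := Tsize_eq hC.
rewrite (@Lwin_change c j a len (- msum m) (Tsize n m).+1 P kk _ _ hS) //; last lia.
exact: hO.
Qed.

Lemma dualPhi (c : coefs R r) (n m : mi r) P X :
  inC2r n m -> ~ (forall j, n j + m j = 0) -> is_Phi c n m P -> is_Xi c n m X ->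
  Lvec c n m (fun j => - n j) X (- msum n - 1) = - P (msum n - 1).
Proof.
move=> hC hnd [hS hP1 hO] [_ /(_ hnd) [hXS hX0 hX1]].
have hT := Tsize_eq hC.
have E := exchange c P (- msum m) (Tsize n m).+1 n m (fun j => - n j) X (-1).
rewrite [RHS]big1 in E; last first.
  move=> j _; rewrite big1_seq // => s /andP[_ hs]; rewrite mem_zs gez0_abs in hs; last exact: hC.
  by rewrite hO ?mulr0 //; apply/andP; split; lia.
rewrite (@sum_support _ _ [:: msum n - 1; msum n]) in E; first last.
- move=> i; rewrite mulf_eq0 negb_or => /andP[/(in_span_nz hS) hin hL].
  have : ~~ (i < msum n - 1).
    apply: contra hL => hi; rewrite hX0 //; apply/andP; split; lia.
  rewrite !inE; case: (i =P msum n - 1) => //= ?; case: (i =P msum n) => //= ?.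
  lia.
- by move=> i; rewrite mulf_eq0 negb_or => /andP[/(in_span_nz hS) hin _]; rewrite mem_zs; lia.
- by rewrite /= inE andbT; apply/negP => /eqP; lia.
- exact: uniq_zs.
rewrite big_cons big_cons big_nil in E.
have e1 : -1 - (msum n - 1) = - msum n by lia.
have e2 : -1 - msum n = - msum n - 1 by lia.
rewrite e1 e2 hX1 hP1 mulr1 mul1r addr0 in E.
by apply/eqP; rewrite -addr_eq0 addrC E.
Qed.

Lemma dualPhistar (c : coefs R r) (n m : mi r) P X :
  inC2r n m -> ~ (forall j, n j + m j = 0) -> is_Phistar c n m P -> is_Xistar c n m X ->
  Lvec c n m (fun j => - n j + 1) X (msum m + 1) = - P (1 - msum m).
Proof.
move=> hC hnd [hS hP1 hO] [_ /(_ hnd) [hXS hX0 hX1]].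
have hT := Tsize_eq hC.
have E := exchange c P (- msum m) (Tsize n m).+1 n m (fun j => - n j + 1) X 1.
rewrite [RHS]big1 in E; last first.
  move=> j _; rewrite big1_seq // => s /andP[_ hs]; rewrite mem_zs gez0_abs in hs; last exact: hC.
  by rewrite hO ?mulr0 //; apply/andP; split; lia.
rewrite (@sum_support _ _ [:: - msum m; 1 - msum m]) in E; first last.
- move=> i; rewrite mulf_eq0 negb_or => /andP[/(in_span_nz hS) hin hL].
  have : ~~ (1 - msum m < i).
    apply: contra hL => hi; rewrite hX0 //; apply/andP; split; lia.
  rewrite !inE; case: (i =P - msum m) => //= ?; case: (i =P 1 - msum m) => //= ?.
  lia.
- by move=> i; rewrite mulf_eq0 negb_or => /andP[/(in_span_nz hS) hin _]; rewrite mem_zs; lia.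
- by rewrite /= inE andbT; apply/negP => /eqP; lia.
- exact: uniq_zs.
rewrite big_cons big_cons big_nil in E.
have e1 : 1 - (1 - msum m) = msum m by lia.
have e2 : 1 - - msum m = msum m + 1 by lia.
rewrite e1 e2 hX1 hP1 mulr1 mul1r addr0 in E.
by apply/eqP; rewrite -addr_eq0 E.
Qed.


Lemma ev_ge0 (k j : 'I_r) : 0 <= ev k j <= 1.
Proof. by rewrite /ev; case: (j == k). Qed.

Lemma partA (x0 : 'I_r) (c : coefs R r) (k l : 'I_r) (n m : mi r) :
  inC2r n m -> inC2r (madd n (ev k)) m -> inC2r (madd n (ev l)) m ->
  normal c n m -> forall P0 Pk Pl,
  is_Phi c n m P0 -> is_Phi c (madd n (ev k)) m Pk -> is_Phi c (madd n (ev l)) m Pl ->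
  forall i, Pk i - Pl i = (Pk (msum n) - Pl (msum n)) * P0 i.
Proof.
move=> hC hCk hCl hN P0 Pk Pl H0 Hk Hl.
have [S0 E0 _] := H0; have [Sk Ek _] := Hk; have [Sl El _] := Hl.
rewrite msum_add in Sk Ek; rewrite msum_add in Sl El.
have hT := Tsize_eq hC.
set g := Pk (msum n) - Pl (msum n).
pose Q i := Pk i - Pl i - g * P0 i.
have SQ : in_span (- msum m) (msum n - 1) Q.
  move=> i hi.
  have [h|[h|[h|h]]] : i < - msum m \/ i = msum n \/ i = msum n + 1 \/ msum n + 1 < i by lia.
  - by rewrite /Q Sk ?Sl ?S0; try lia; rewrite mulr0 !subr0.
  - by rewrite /Q h E0 mulr1 subrr.
  - by rewrite /Q h Ek El S0; try lia; rewrite mulr0 subrr subr0.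
  - by rewrite /Q Sk ?Sl ?S0; try lia; rewrite mulr0 !subr0.
have hQ := uniqT x0 hC hN SQ.
have {}hQ : forall i, Q i = 0.
  apply: hQ => j kk hkk; rewrite -Lwin_seq.
  rewrite (@Lwin_change c j _ _ (- msum m) (Tsize n m).+2 Q kk _ _ SQ); try lia.
  rewrite Lwin_comb.
  have := ev_ge0 k j; have := ev_ge0 l j => evl evk.
  rewrite (Lwin_Phi hCk Hk) ?(Lwin_Phi hCl Hl) ?(Lwin_Phi hC H0) ?mulr0 ?subrr //;
    rewrite ?msum_add /madd; lia.
by move=> i; apply/eqP; rewrite -subr_eq0; apply/eqP; exact: hQ.
Qed.

Lemma partC (x0 : 'I_r) (c : coefs R r) (k l : 'I_r) (n m : mi r) :
  inC2r n m -> inC2r n (madd m (ev k)) -> inC2r n (madd m (ev l)) ->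
  normal c n m -> forall P0 Pk Pl,
  is_Phistar c n m P0 -> is_Phistar c n (madd m (ev k)) Pk ->
  is_Phistar c n (madd m (ev l)) Pl ->
  forall i, Pk i - Pl i = (Pk (- msum m) - Pl (- msum m)) * P0 i.
Proof.
move=> hC hCk hCl hN P0 Pk Pl H0 Hk Hl.
have [S0 E0 _] := H0; have [Sk Ek _] := Hk; have [Sl El _] := Hl.
rewrite msum_add in Sk Ek; rewrite msum_add in Sl El.
have hT := Tsize_eq hC.
set g := Pk (- msum m) - Pl (- msum m).
pose Q i := Pk i - Pl i - g * P0 i.
have SQ : in_span (- msum m + 1) (msum n) Q.
  move=> i hi.
  have [h|[h|[h|h]]] : i < - msum m - 1 \/ i = - (msum m + 1) \/ i = - msum m \/ msum n < i by lia.
  - by rewrite /Q Sk ?Sl ?S0; try lia; rewrite mulr0 !subr0.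
  - by rewrite /Q h Ek El S0; try lia; rewrite mulr0 subrr subr0.
  - by rewrite /Q h E0 mulr1 subrr.
  - by rewrite /Q Sk ?Sl ?S0; try lia; rewrite mulr0 !subr0.
pose Q' i := Q (i + 1).
have SQ' : in_span (- msum m) (msum n - 1) Q' by move=> i hi; apply: SQ; lia.
have hQ := uniqT x0 hC hN SQ'.
have {}hQ : forall i, Q' i = 0.
  apply: hQ => j kk hkk; rewrite -Lwin_seq /Q' Lwin_shift.
  rewrite (@Lwin_change c j _ _ (- msum m - 1) (Tsize n m).+2 Q (kk + 1) _ _ SQ); try lia.
  rewrite Lwin_comb.
  have := ev_ge0 k j; have := ev_ge0 l j => evl evk.
  rewrite (Lwin_Phistar hCk Hk) ?(Lwin_Phistar hCl Hl) ?(Lwin_Phistar hC H0) ?mulr0 ?subrr //;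
    rewrite ?msum_add /madd; lia.
move=> i; apply/eqP; rewrite -subr_eq0; apply/eqP.
by have := hQ (i - 1); rewrite /Q' subrK.
Qed.


Lemma NaddK (n : mi r) (k l : 'I_r) :
  madd (msub (msub n (ev k)) (ev l)) (ev k) = msub n (ev l).
Proof. by apply: functional_extensionality => j; rewrite /madd /msub; lia. Qed.

Lemma NaddL (n : mi r) (k l : 'I_r) :
  madd (msub (msub n (ev k)) (ev l)) (ev l) = msub n (ev k).
Proof. by apply: functional_extensionality => j; rewrite /madd /msub; lia. Qed.

Lemma partB (x0 : 'I_r) (c : coefs R r) (k l : 'I_r) (hkl : k != l) :
  (forall n m : mi r,
     let N := msub (msub n (ev k)) (ev l) in
     inC2r N m -> inC2r (msub n (ev k)) m -> inC2r (msub n (ev l)) m ->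
     inC2r n m ->
     normal c N m -> normal c (msub n (ev k)) m -> normal c (msub n (ev l)) m ->
     normal c n m ->
     forall P0 Pk Pl Xk Xl X,
       is_Phi c N m P0 -> is_Phi c (madd N (ev k)) m Pk ->
       is_Phi c (madd N (ev l)) m Pl ->
       is_Xi c (msub n (ev k)) m Xk -> is_Xi c (msub n (ev l)) m Xl ->
       is_Xi c n m X ->
       forall gamma : R[i], (forall i, Pk i - Pl i = gamma * P0 i) ->
       forall j i, Xk j i - Xl j i = gamma * X j i).
Proof.
move=> n m N hCN hCk hCl hC _ _ _ hN P0 Pk Pl Xk Xl X H0 Hk Hl HXk HXl HX g Hg.
rewrite /N NaddK in Hk; rewrite /N NaddL in Hl.
have hlk : (l == k) = false by rewrite eq_sym; apply/negbTE.
have hkl' : (k == l) = false by apply/negbTE.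
have hgv : Pk (msum n - 2) - Pl (msum n - 2) = g.
  have [_ E0 _] := H0; have := Hg (msum N).
  by rewrite E0 mulr1 /N !msum_sub; have -> : msum n - 1 - 1 = msum n - 2 by lia.
have ndk : ~ (forall j, msub n (ev k) j + m j = 0).
  by move=> h; have := h l; have := hCN l; rewrite /N /msub /ev eqxx hlk; lia.
have ndl : ~ (forall j, msub n (ev l) j + m j = 0).
  by move=> h; have := h k; have := hCN k; rewrite /N /msub /ev eqxx hkl'; lia.
have nd : ~ (forall j, n j + m j = 0).
  by move=> h; have := h k; have := hCN k; rewrite /N /msub /ev eqxx hkl'; lia.
have dk := dualPhi hCk ndk Hl HXk.
have dl := dualPhi hCl ndl Hk HXl.
rewrite msum_sub in dk; rewrite msum_sub in dl.
have e1 : - (msum n - 1) - 1 = - msum n by lia.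
have e2 : msum n - 1 - 1 = msum n - 2 by lia.
rewrite e1 e2 in dk; rewrite e1 e2 in dl.
have [_ /(_ ndk) [SXk ZXk OXk]] := HXk.
have [_ /(_ ndl) [SXl ZXl OXl]] := HXl.
have [_ /(_ nd) [SX ZX OX]] := HX.
rewrite msum_sub in ZXk; rewrite msum_sub in OXk; rewrite msum_sub in ZXl; rewrite msum_sub in OXl.
have hQ := @uniqTT x0 c n m (fun j i => Xk j i - Xl j i - g * X j i) hC hN.
have {}hQ : forall j i, Xk j i - Xl j i - g * X j i = 0.
  apply: hQ.
    move=> j; apply: span_comb => //.
      apply: span_mono (SXk j) _ _ => //; rewrite /msub; have := ev_ge0 k j; lia.
    apply: span_mono (SXl j) _ _ => //; rewrite /msub; have := ev_ge0 l j; lia.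
  move=> K hK; rewrite Lvec_comb.
  rewrite (@Lvec_change c n m (msub n (ev k)) m _ (fun j => - msub n (ev k) j) Xk K _ _ SXk) //;
    try (by move=> j; rewrite /msub; have := ev_ge0 k j; have := hC j; lia).
  rewrite (@Lvec_change c n m (msub n (ev l)) m _ (fun j => - msub n (ev l) j) Xl K _ _ SXl) //;
    try (by move=> j; rewrite /msub; have := ev_ge0 l j; have := hC j; lia).
  have [eK|[eK|hK2]] : K = - msum n \/ K = - msum n + 1 \/ - msum n + 2 <= K by lia.
  - rewrite eK dk dl OX -hgv; ring.
  - have e3 : K = - (msum n - 1) by lia.
    rewrite e3 OXk OXl -e3 ZX; first by ring.
    by apply/andP; split; lia.
  - rewrite ZXk ?ZXl ?ZX; first (by ring); by apply/andP; split; lia.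
by move=> j i; apply/eqP; rewrite -subr_eq0; apply/eqP; exact: hQ.
Qed.


Lemma partD (x0 : 'I_r) (c : coefs R r) (k l : 'I_r) (hkl : k != l) :
  (forall n m : mi r,
     let M := msub (msub m (ev k)) (ev l) in
     inC2r n M -> inC2r n (msub m (ev k)) -> inC2r n (msub m (ev l)) ->
     inC2r n m ->
     normal c n M -> normal c n (msub m (ev k)) -> normal c n (msub m (ev l)) ->
     normal c n m ->
     forall P0 Pk Pl Xk Xl X,
       is_Phistar c n M P0 -> is_Phistar c n (madd M (ev k)) Pk ->
       is_Phistar c n (madd M (ev l)) Pl ->
       is_Xistar c n (msub m (ev k)) Xk -> is_Xistar c n (msub m (ev l)) Xl ->
       is_Xistar c n m X ->
       forall eta : R[i], (forall i, Pk i - Pl i = eta * P0 i) ->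
       forall j i, Xk j i - Xl j i = eta * X j i).
Proof.
move=> n m M hCM hCk hCl hC _ _ _ hN P0 Pk Pl Xk Xl X H0 Hk Hl HXk HXl HX g Hg.
rewrite /M NaddK in Hk; rewrite /M NaddL in Hl.
have hlk : (l == k) = false by rewrite eq_sym; apply/negbTE.
have hkl' : (k == l) = false by apply/negbTE.
have hgv : Pk (2 - msum m) - Pl (2 - msum m) = g.
  have [_ E0 _] := H0; have := Hg (- msum M).
  by rewrite E0 mulr1 /M !msum_sub; have -> : - (msum m - 1 - 1) = 2 - msum m by lia.
have ndk : ~ (forall j, n j + msub m (ev k) j = 0).
  by move=> h; have := h l; have := hCM l; rewrite /M /msub /ev eqxx hlk; lia.
have ndl : ~ (forall j, n j + msub m (ev l) j = 0).
  by move=> h; have := h k; have := hCM k; rewrite /M /msub /ev eqxx hkl'; lia.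
have nd : ~ (forall j, n j + m j = 0).
  by move=> h; have := h k; have := hCM k; rewrite /M /msub /ev eqxx hkl'; lia.
have dk := dualPhistar hCk ndk Hl HXk.
have dl := dualPhistar hCl ndl Hk HXl.
rewrite msum_sub in dk; rewrite msum_sub in dl.
have e1 : msum m - 1 + 1 = msum m by lia.
have e2 : 1 - (msum m - 1) = 2 - msum m by lia.
rewrite e1 e2 in dk; rewrite e1 e2 in dl.
have [_ /(_ ndk) [SXk ZXk OXk]] := HXk.
have [_ /(_ ndl) [SXl ZXl OXl]] := HXl.
have [_ /(_ nd) [SX ZX OX]] := HX.
rewrite msum_sub in ZXk; rewrite msum_sub in OXk; rewrite msum_sub in ZXl; rewrite msum_sub in OXl.
have SD : forall j, in_span (- n j + 1) (m j) (fun i => Xk j i - Xl j i - g * X j i).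
  move=> j; apply: span_comb => //.
    apply: span_mono (SXk j) _ _ => //; rewrite /msub; have := ev_ge0 k j; lia.
  apply: span_mono (SXl j) _ _ => //; rewrite /msub; have := ev_ge0 l j; lia.
have hQ := @uniqTT x0 c n m (fun j i => Xk j (i + 1) - Xl j (i + 1) - g * X j (i + 1)) hC hN.
have {}hQ : forall j i, Xk j (i + 1) - Xl j (i + 1) - g * X j (i + 1) = 0.
  apply: hQ.
    by move=> j i hi; apply: (SD j); lia.
  move=> K hK.
  rewrite (Lvec_shift c n m (fun j i => Xk j i - Xl j i - g * X j i)) Lvec_comb.
  rewrite (@Lvec_change c n m n (msub m (ev k)) _ (fun j => - n j + 1) Xk (K + 1) _ _ SXk) //;
    try (by move=> j; rewrite /msub; have := ev_ge0 k j; have := hC j; lia).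
  rewrite (@Lvec_change c n m n (msub m (ev l)) _ (fun j => - n j + 1) Xl (K + 1) _ _ SXl) //;
    try (by move=> j; rewrite /msub; have := ev_ge0 l j; have := hC j; lia).
  have [eK|[eK|hK2]] : K + 1 = msum m \/ K + 1 = msum m - 1 \/ K + 1 <= msum m - 2 by lia.
  - rewrite eK dk dl OX -hgv; ring.
  - rewrite eK OXk OXl -eK ZX; first by ring.
    by apply/andP; split; lia.
  - rewrite ZXk ?ZXl ?ZX; first (by ring); by apply/andP; split; lia.
move=> j i; apply/eqP; rewrite -subr_eq0; apply/eqP.
by have := hQ j (i - 1); rewrite subrK.
Qed.

End H.

Unset Implicit Arguments.

Theorem proposition6p1 (R : realType) (r : nat) (hr : (0 < r)%N)
    (c : coefs R r) (k l : 'I_r) (hkl : k != l) :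
  (* (a) *)
  (forall n m : mi r,
     inC2r n m -> inC2r (madd n (ev k)) m -> inC2r (madd n (ev l)) m ->
     normal c n m -> normal c (madd n (ev k)) m -> normal c (madd n (ev l)) m ->
     forall P0 Pk Pl,
       is_Phi c n m P0 -> is_Phi c (madd n (ev k)) m Pk ->
       is_Phi c (madd n (ev l)) m Pl ->
       exists gamma : R[i], forall i, Pk i - Pl i = gamma * P0 i) /\
  (* (b) *)
  (forall n m : mi r,
     let N := msub (msub n (ev k)) (ev l) in
     inC2r N m -> inC2r (msub n (ev k)) m -> inC2r (msub n (ev l)) m ->
     inC2r n m ->
     normal c N m -> normal c (msub n (ev k)) m -> normal c (msub n (ev l)) m ->
     normal c n m ->
     forall P0 Pk Pl Xk Xl X,
       is_Phi c N m P0 -> is_Phi c (madd N (ev k)) m Pk ->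
       is_Phi c (madd N (ev l)) m Pl ->
       is_Xi c (msub n (ev k)) m Xk -> is_Xi c (msub n (ev l)) m Xl ->
       is_Xi c n m X ->
       forall gamma : R[i], (forall i, Pk i - Pl i = gamma * P0 i) ->
       forall j i, Xk j i - Xl j i = gamma * X j i) /\
  (* (c) *)
  (forall n m : mi r,
     inC2r n m -> inC2r n (madd m (ev k)) -> inC2r n (madd m (ev l)) ->
     normal c n m -> normal c n (madd m (ev k)) -> normal c n (madd m (ev l)) ->
     forall P0 Pk Pl,
       is_Phistar c n m P0 -> is_Phistar c n (madd m (ev k)) Pk ->
       is_Phistar c n (madd m (ev l)) Pl ->
       exists eta : R[i], forall i, Pk i - Pl i = eta * P0 i) /\
  (* (d) *)
  (forall n m : mi r,
     let M := msub (msub m (ev k)) (ev l) in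
     inC2r n M -> inC2r n (msub m (ev k)) -> inC2r n (msub m (ev l)) ->
     inC2r n m ->
     normal c n M -> normal c n (msub m (ev k)) -> normal c n (msub m (ev l)) ->
     normal c n m ->
     forall P0 Pk Pl Xk Xl X,
       is_Phistar c n M P0 -> is_Phistar c n (madd M (ev k)) Pk ->
       is_Phistar c n (madd M (ev l)) Pl ->
       is_Xistar c n (msub m (ev k)) Xk -> is_Xistar c n (msub m (ev l)) Xl ->
       is_Xistar c n m X ->
       forall eta : R[i], (forall i, Pk i - Pl i = eta * P0 i) ->
       forall j i, Xk j i - Xl j i = eta * X j i).
Proof.
pose x0 : 'I_r := Ordinal hr.
split; [|split; [|split]].
- move=> n m hC hCk hCl hN _ _ P0 Pk Pl H0 Hk Hl.
  by exists (Pk (msum n) - Pl (msum n)); apply: (partA x0 hC hCk hCl hN H0 Hk Hl).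
- exact: (@partB R r x0 c k l hkl).
- move=> n m hC hCk hCl hN _ _ P0 Pk Pl H0 Hk Hl.
  by exists (Pk (- msum m) - Pl (- msum m)); apply: (partC x0 hC hCk hCl hN H0 Hk Hl).
- exact: (@partD R r x0 c k l hkl).
Qed.
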